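(* Let $X,Y$ be metric spaces with bounded geometry, and equip $X\times Y$ with the $\ell^\infty$ product metric. For every $q,q'\geq 1$, $\mathrm{TO}^{q+q'}_{X\times Y}(r) \lesssim \mathrm{TO}^q_X(r)\,\mathrm{TO}^{q'}_Y(r)$.
   Context: A metric space has bounded geometry if for every $R\ge r>0$ there is $C(R,r)$ such that every ball of radius $R$ is covered by $C(R,r)$ balls of radius $r$. For $Z\subseteq X$, $\mathrm{Cov}^1(Z)$ is the minimal number of closed balls of radius $1$ in $X$ covering $Z$ ($+\infty$ if none). For $Z$ with $\mathrm{Cov}^1(Z)<\infty$ and continuous $f:Z\to\mathbb R^q$, $\mathrm{Ov}(f)=\sup_{z}\mathrm{Cov}^1(f^{-1}(z))$, $\mathrm{TO}^q(Z)=\min_f\mathrm{Ov}(f)$, $\mathrm{TO}^q_X(r)=\max\{\mathrm{TO}^q(Z): Z\subseteq X,\mathrm{Cov}^1(Z)\le r\}$. $f\lesssim g$ means there is $C$ with $f(r)\le Cg(Cr)+C$ for all $r$. (The paper notes that changing to any $\ell^p$ product metric does not change $\mathrm{TO}$ up to $\simeq$.) *)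

(* Defs.v *)
From Stdlib Require Import Reals List ClassicalEpsilon.
Open Scope R_scope.

(* The least natural number satisfying P (arbitrary if none exists). *)
Definition nat_min (P : nat -> Prop) : nat :=
  epsilon (inhabits 0%nat) (fun n => P n /\ forall m, P m -> (n <= m)%nat).

(* The least upper bound (= max when attained) of the set P of naturals
   (arbitrary if P is unbounded). *)
Definition nat_sup (P : nat -> Prop) : nat :=
  nat_min (fun k => forall m, P m -> (m <= k)%nat).

Definition is_metric {T : Type} (d : T -> T -> R) : Prop :=
  (forall x y, 0 <= d x y) /\
  (forall x y, d x y = 0 <-> x = y) /\
  (forall x y, d x y = d y x) /\
  (forall x y z, d x z <= d x y + d y z).

Definition cball {T : Type} (d : T -> T -> R) (c : T) (r : R) (x : T) : Prop :=
  d c x <= r.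

Definition covered_by {T : Type} (d : T -> T -> R) (r : R) (Z : T -> Prop) (n : nat) : Prop :=
  exists cs : list T, (length cs <= n)%nat /\
    forall z, Z z -> exists c, In c cs /\ cball d c r z.

Definition bounded_geometry {T : Type} (d : T -> T -> R) : Prop :=
  forall Rad r : R, 0 < r -> r <= Rad ->
    exists C : nat, forall x : T, covered_by d r (cball d x Rad) C.

Definition prod_dist {X Y : Type} (dX : X -> X -> R) (dY : Y -> Y -> R)
  (p p' : X * Y) : R := Rmax (dX (fst p) (fst p')) (dY (snd p) (snd p')).

Definition Rvec (q : nat) : Type := {i : nat | (i < q)%nat} -> R.

(* continuity of f : Z -> R^q, Z carrying the induced metric
   (sup norm on R^q; all norms give the same topology) *)
Definition continuous_on {T : Type} (d : T -> T -> R) (Z : T -> Prop) {q : nat}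
  (f : T -> Rvec q) : Prop :=
  forall x, Z x -> forall eps, 0 < eps -> exists delta, 0 < delta /\
    forall y, Z y -> d x y < delta -> forall i, Rabs (f y i - f x i) < eps.

Definition Cov1_finite {T : Type} (d : T -> T -> R) (Z : T -> Prop) : Prop :=
  exists n, covered_by d 1 Z n.

(* Cov^1(Z): minimal number of closed radius-1 balls covering Z
   (only meaningful when Cov1_finite d Z). *)
Definition Cov1 {T : Type} (d : T -> T -> R) (Z : T -> Prop) : nat :=
  nat_min (covered_by d 1 Z).

Definition fibre {T : Type} (Z : T -> Prop) {q : nat} (f : T -> Rvec q) (z : Rvec q)
  (x : T) : Prop := Z x /\ f x = z.

Definition Ov {T : Type} (d : T -> T -> R) (Z : T -> Prop) {q : nat} (f : T -> Rvec q) : nat :=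
  nat_sup (fun m => exists z : Rvec q, m = Cov1 d (fibre Z f z)).

Definition TO {T : Type} (d : T -> T -> R) (q : nat) (Z : T -> Prop) : nat :=
  nat_min (fun k => exists f : T -> Rvec q, continuous_on d Z f /\ Ov d Z f = k).

Definition TOX {T : Type} (d : T -> T -> R) (q : nat) (r : nat) : nat :=
  nat_sup (fun k => exists Z : T -> Prop,
    Cov1_finite d Z /\ (Cov1 d Z <= r)%nat /\ k = TO d q Z).

(* Main.v *)
Require Import Defs.
From Stdlib Require Import Reals.
From Stdlib Require Import List ClassicalEpsilon Classical Lia Arith Wf_nat Lra FunctionalExtensionality.
Open Scope R_scope.

Lemma least_ex (P : nat -> Prop) : (exists n, P n) -> exists n, P n /\ forall m, P m -> (n <= m)%nat.
Proof.
  intros Hn.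
  destruct (dec_inh_nat_subset_has_unique_least_element P (fun k => classic (P k)) Hn) as [m [[Hm1 Hm2] _]].
  exists m; split; auto.
Qed.

Lemma nat_min_spec P : (exists n, P n) -> P (nat_min P) /\ forall m, P m -> (nat_min P <= m)%nat.
Proof. intros H. unfold nat_min. apply epsilon_spec. apply least_ex; auto. Qed.

Lemma nat_sup_spec P : (exists b, forall m, P m -> (m <= b)%nat) ->
  (forall m, P m -> (m <= nat_sup P)%nat) /\
  (forall k, (forall m, P m -> (m <= k)%nat) -> (nat_sup P <= k)%nat).
Proof. intros H. unfold nat_sup. destruct (nat_min_spec _ H) as [H1 H2]. split; auto. Qed.

Lemma covered_mono {T} (d : T -> T -> R) r (Z W : T -> Prop) n m :
  (forall x, W x -> Z x) -> (n <= m)%nat -> covered_by d r Z n -> covered_by d r W m.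
Proof. intros HWZ Hnm [cs [Hl Hc]]. exists cs; split; [lia| intros z Hz; apply Hc, HWZ, Hz]. Qed.

Lemma Cov1_spec {T} (d : T -> T -> R) Z : Cov1_finite d Z ->
  covered_by d 1 Z (Cov1 d Z) /\ forall n, covered_by d 1 Z n -> (Cov1 d Z <= n)%nat.
Proof. intros H. apply (nat_min_spec _ H). Qed.

Lemma Ov_spec {T} (d : T -> T -> R) Z {q} (f : T -> Rvec q) : Cov1_finite d Z ->
  (forall z, (Cov1 d (fibre Z f z) <= Ov d Z f)%nat) /\
  (forall k, (forall z, covered_by d 1 (fibre Z f z) k) -> (Ov d Z f <= k)%nat).
Proof.
  intros HZ. destruct (Cov1_spec d Z HZ) as [HC _].
  assert (Hfin : forall z, Cov1_finite d (fibre Z f z)).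
  { intros z. exists (Cov1 d Z). eapply covered_mono; [|apply le_n|exact HC]. intros x [Hx _]; exact Hx. }
  assert (Hb : exists b, forall m, (exists z, m = Cov1 d (fibre Z f z)) -> (m <= b)%nat).
  { exists (Cov1 d Z). intros m [z ->]. apply (Cov1_spec d _ (Hfin z)).
    eapply covered_mono; [|apply le_n|exact HC]. intros x [Hx _]; exact Hx. }
  destruct (nat_sup_spec _ Hb) as [H1 H2]. unfold Ov. split.
  - intros z. apply H1. eauto.
  - intros k Hk. apply H2. intros m [z ->]. apply (Cov1_spec d _ (Hfin z)). apply Hk.
Qed.

Definition constf (q : nat) {T} : T -> Rvec q := fun _ _ => 0.

Lemma const_cont {T} (d : T -> T -> R) Z q : continuous_on d Z (@constf q T).
Proof.
  intros x _ eps Heps. exists 1. split; [lra|]. intros y _ _ i. unfold constf.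
  replace (0 - 0) with 0 by ring. rewrite Rabs_R0; lra.
Qed.

Lemma TO_spec {T} (d : T -> T -> R) q Z :
  (exists f : T -> Rvec q, continuous_on d Z f /\ Ov d Z f = TO d q Z) /\
  (forall f : T -> Rvec q, continuous_on d Z f -> (TO d q Z <= Ov d Z f)%nat).
Proof.
  assert (Hne : exists k, exists f : T -> Rvec q, continuous_on d Z f /\ Ov d Z f = k).
  { exists (Ov d Z (constf q)), (constf q). split; auto using const_cont. }
  destruct (nat_min_spec _ Hne) as [H1 H2]. unfold TO. split.
  - destruct H1 as [f [Hf Hov]]. exists f; auto.
  - intros f Hf. apply H2. eauto.
Qed.

Lemma TO_le_Cov1 {T} (d : T -> T -> R) q Z : Cov1_finite d Z -> (TO d q Z <= Cov1 d Z)%nat.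
Proof.
  intros HZ. eapply Nat.le_trans. apply (proj2 (TO_spec d q Z) (constf q)), const_cont.
  apply (Ov_spec d Z (constf q) HZ). intros z. destruct (Cov1_spec d Z HZ) as [HC _].
  eapply covered_mono; [|apply le_n|exact HC]. intros x [Hx _]; exact Hx.
Qed.

Lemma TOX_spec {T} (d : T -> T -> R) q r :
  (forall Z, Cov1_finite d Z -> (Cov1 d Z <= r)%nat -> (TO d q Z <= TOX d q r)%nat) /\
  (forall k, (forall Z, Cov1_finite d Z -> (Cov1 d Z <= r)%nat -> (TO d q Z <= k)%nat) ->
     (TOX d q r <= k)%nat).
Proof.
  assert (Hb : exists b, forall m, (exists Z : T -> Prop, Cov1_finite d Z /\ (Cov1 d Z <= r)%nat /\ m = TO d q Z) -> (m <= b)%nat).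
  { exists r. intros m [Z [HZ [Hr ->]]]. eapply Nat.le_trans; [apply TO_le_Cov1; auto|auto]. }
  destruct (nat_sup_spec _ Hb) as [H1 H2]. unfold TOX. split.
  - intros Z HZ Hr. apply H1. eauto.
  - intros k Hk. apply H2. intros m [Z [HZ [Hr ->]]]. auto.
Qed.

Definition ext {q} (f : Rvec q) (n : nat) : R :=
  match lt_dec n q with left h => f (exist _ n h) | right _ => 0 end.

Definition vjoin {q q'} (u : Rvec q) (v : Rvec q') : Rvec (q + q') :=
  fun i => if lt_dec (proj1_sig i) q then ext u (proj1_sig i) else ext v (proj1_sig i - q).

Definition vfst {q q'} (z : Rvec (q+q')) : Rvec q := fun i => ext z (proj1_sig i).
Definition vsnd {q q'} (z : Rvec (q+q')) : Rvec q' := fun i => ext z (q + proj1_sig i).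

Lemma ext_val {q} (f : Rvec q) n (h : (n < q)%nat) : ext f n = f (exist _ n h).
Proof.
  unfold ext; destruct (lt_dec n q) as [h'|h'].
  - f_equal. f_equal. apply Peano_dec.le_unique.
  - contradiction.
Qed.

Lemma vjoin_fst {q q'} (u : Rvec q) (v : Rvec q') z : vjoin u v = z -> u = vfst (q':=q') z.
Proof.
  intros Hz. apply functional_extensionality. intros [n h]. unfold vfst. simpl.
  assert (h2 : (n < q + q')%nat) by lia.
  rewrite (ext_val z n h2). rewrite <- Hz. unfold vjoin. simpl.
  destruct (lt_dec n q); [|contradiction]. symmetry; apply (ext_val u n h).
Qed.

Lemma vjoin_snd {q q'} (u : Rvec q) (v : Rvec q') z : vjoin u v = z -> v = vsnd (q:=q) z.
Proof.
  intros Hz. apply functional_extensionality. intros [n h]. unfold vsnd. simpl.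
  assert (h2 : (q + n < q + q')%nat) by lia.
  rewrite (ext_val z _ h2). rewrite <- Hz. unfold vjoin. simpl.
  destruct (lt_dec (q + n) q); [lia|].
  replace (q + n - q)%nat with n by lia. symmetry; apply (ext_val v n h).
Qed.

Lemma cover_proj1 {X Y} (dX : X -> X -> R) (dY : Y -> Y -> R) Z n :
  covered_by (prod_dist dX dY) 1 Z n -> covered_by dX 1 (fun x => exists y, Z (x, y)) n.
Proof.
  intros [cs [Hl Hc]]. exists (map fst cs). rewrite length_map. split; auto.
  intros x [y Hxy]. destruct (Hc _ Hxy) as [c [Hin Hb]]. exists (fst c). split.
  - apply in_map; auto.
  - unfold cball, prod_dist in *. simpl in Hb. eapply Rle_trans; [apply Rmax_l|exact Hb].
Qed.

Lemma cover_proj2 {X Y} (dX : X -> X -> R) (dY : Y -> Y -> R) Z n :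
  covered_by (prod_dist dX dY) 1 Z n -> covered_by dY 1 (fun y => exists x, Z (x, y)) n.
Proof.
  intros [cs [Hl Hc]]. exists (map snd cs). rewrite length_map. split; auto.
  intros y [x Hxy]. destruct (Hc _ Hxy) as [c [Hin Hb]]. exists (snd c). split.
  - apply in_map; auto.
  - unfold cball, prod_dist in *. simpl in Hb. eapply Rle_trans; [apply Rmax_r|exact Hb].
Qed.

Lemma cover_prod {X Y} (dX : X -> X -> R) (dY : Y -> Y -> R) A B m n :
  covered_by dX 1 A m -> covered_by dY 1 B n ->
  covered_by (prod_dist dX dY) 1 (fun p => A (fst p) /\ B (snd p)) (m * n).
Proof.
  intros [c1 [H1 Hc1]] [c2 [H2 Hc2]]. exists (list_prod c1 c2). split.
  - rewrite length_prod. apply Nat.mul_le_mono; auto.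
  - intros [a b] [Ha Hb]. simpl in *. destruct (Hc1 _ Ha) as [x [Hx Hbx]].
    destruct (Hc2 _ Hb) as [y [Hy Hby]]. exists (x, y). split.
    + apply in_prod; auto.
    + unfold cball, prod_dist in *; simpl. apply Rmax_lub; auto.
Qed.

Theorem theorem1p8 (X Y : Type) (dX : X -> X -> R) (dY : Y -> Y -> R) (q q' : nat) :
  is_metric dX -> is_metric dY ->
  bounded_geometry dX -> bounded_geometry dY ->
  (1 <= q)%nat -> (1 <= q')%nat ->
  exists C : nat, forall r : nat,
    (TOX (prod_dist dX dY) (q + q') r
       <= C * (TOX dX q (C * r) * TOX dY q' (C * r)) + C)%nat.
Proof.
  intros _ _ _ _ _ _. exists 1%nat. intros r. rewrite !Nat.mul_1_l.
  enough (TOX (prod_dist dX dY) (q + q') r <= TOX dX q r * TOX dY q' r)%nat by lia.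
  apply (proj2 (TOX_spec _ _ r)). intros Z HZ Hr.
  destruct (Cov1_spec _ Z HZ) as [HC _].
  set (A := fun x => exists y, Z (x, y)).
  set (B := fun y => exists x, Z (x, y)).
  assert (HA : covered_by dX 1 A (Cov1 (prod_dist dX dY) Z)) by (apply (cover_proj1 dX dY); auto).
  assert (HB : covered_by dY 1 B (Cov1 (prod_dist dX dY) Z)) by (apply (cover_proj2 dX dY); auto).
  assert (HAf : Cov1_finite dX A) by (eexists; eauto).
  assert (HBf : Cov1_finite dY B) by (eexists; eauto).
  assert (HAr : (Cov1 dX A <= r)%nat) by (eapply Nat.le_trans; [apply (Cov1_spec _ _ HAf); eauto | auto]).
  assert (HBr : (Cov1 dY B <= r)%nat) by (eapply Nat.le_trans; [apply (Cov1_spec _ _ HBf); eauto | auto]).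
  pose proof (proj1 (TOX_spec dX q r) A HAf HAr) as HTA.
  pose proof (proj1 (TOX_spec dY q' r) B HBf HBr) as HTB.
  destruct (proj1 (TO_spec dX q A)) as [f1 [Hf1 Hov1]].
  destruct (proj1 (TO_spec dY q' B)) as [f2 [Hf2 Hov2]].
  set (g := fun p : X * Y => vjoin (f1 (fst p)) (f2 (snd p))).
  assert (Hg : continuous_on (prod_dist dX dY) Z g).
  { intros [a b] Hab eps Heps.
    assert (Ha : A a) by (exists b; auto).
    assert (Hb : B b) by (exists a; auto).
    destruct (Hf1 a Ha eps Heps) as [d1 [Hd1 Hc1]].
    destruct (Hf2 b Hb eps Heps) as [d2 [Hd2 Hc2]].
    exists (Rmin d1 d2). split; [apply Rmin_pos; auto|].
    intros [a' b'] Hab' Hd [n h]. unfold g, vjoin; simpl.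
    unfold prod_dist in Hd; simpl in Hd.
    destruct (lt_dec n q) as [hq|hq].
    - rewrite !(ext_val _ n hq). apply Hc1.
      + exists b'; auto.
      + eapply Rle_lt_trans; [apply Rmax_l|]. eapply Rlt_le_trans; [exact Hd|apply Rmin_l].
    - assert (hq' : (n - q < q')%nat) by lia.
      rewrite !(ext_val _ _ hq'). apply Hc2.
      + exists a'; auto.
      + eapply Rle_lt_trans; [apply Rmax_r|]. eapply Rlt_le_trans; [exact Hd|apply Rmin_r]. }
  eapply Nat.le_trans. apply (proj2 (TO_spec _ _ Z) g Hg).
  apply (Ov_spec _ Z g HZ). intros z.
  apply covered_mono with
    (Z := fun p => fibre A f1 (vfst (q':=q') z) (fst p) /\ fibre B f2 (vsnd (q:=q) z) (snd p))
    (n := (TOX dX q r * TOX dY q' r)%nat); [ | apply le_n | apply cover_prod ].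
  - intros [a b] [HZab Hgz]. unfold g in Hgz; simpl in *. split; split.
    + exists b; auto.
    + eapply vjoin_fst; eauto.
    + exists a; auto.
    + eapply vjoin_snd; eauto.
  - assert (Hfin : Cov1_finite dX (fibre A f1 (vfst (q':=q') z))).
    { exists (Cov1 dX A). eapply covered_mono; [|apply le_n|apply (Cov1_spec _ _ HAf)].
      intros x [Hx _]; exact Hx. }
    eapply covered_mono; [intros x Hx; exact Hx| |apply (Cov1_spec _ _ Hfin)].
    pose proof (proj1 (Ov_spec dX A f1 HAf) (vfst (q':=q') z)). lia.
  - assert (Hfin : Cov1_finite dY (fibre B f2 (vsnd (q:=q) z))).
    { exists (Cov1 dY B). eapply covered_mono; [|apply le_n|apply (Cov1_spec _ _ HBf)].
      intros x [Hx _]; exact Hx. }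
    eapply covered_mono; [intros x Hx; exact Hx| |apply (Cov1_spec _ _ Hfin)].
    pose proof (proj1 (Ov_spec dY B f2 HBf) (vsnd (q:=q) z)). lia.
Qed.
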